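(* Let $m,n\geq 0$ be integers. Then \[ \sum_{k=1}^{n}\frac{(-1)^k q^{mk+\binom{k+1}{2}}}{(q;q)_k (q;q)_{n-k}(q^k;q)_{m+1}} -\sum_{k=1}^{m}\frac{(-1)^k q^{nk+\binom{k+1}{2}}}{(q;q)_k (q;q)_{m-k}(q^k;q)_{n+1}} =\frac{1}{(q;q)_{m}(q;q)_{n}}\left(\sum_{k=1}^m\frac{q^k}{1-q^k}-\sum_{k=1}^n\frac{q^k}{1-q^k}\right). \]
   Context: For $N\geq 0$, $(x;q)_N=(1-x)(1-xq)\cdots(1-xq^{N-1})$ (with $(x;q)_0=1$). The identity is one of rational functions in $q$. *)

(* Defs.v *)
From HB Require Import structures.
From mathcomp Require Import all_boot all_order all_algebra.
Set Implicit Arguments. Unset Strict Implicit. Unset Printing Implicit Defensive.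
Import Order.TTheory GRing.Theory Num.Theory.
Local Open Scope ring_scope.

Definition qpoch (R : comRingType) (x q : R) (N : nat) : R :=
  \prod_(i < N) (1 - x * q ^+ i).

Definition RatFun := {fraction {poly rat}}.
Definition qv : RatFun := tofrac ('X : {poly rat}).

(* Main.v *)
Require Import Defs.
From HB Require Import structures.
From mathcomp Require Import all_boot all_order all_algebra ring.
From mathcomp Require Import zify.
Set Implicit Arguments. Unset Strict Implicit. Unset Printing Implicit Defensive.
Import GRing.Theory.
Local Open Scope ring_scope.

Definition qok (F : fieldType) (q : F) := forall i : nat, (0 < i)%N -> 1 - q ^+ i != 0.

Lemma qpochS (F : fieldType) (x q : F) N : qpoch x q N.+1 = qpoch x q N * (1 - x * q ^+ N).
Proof. by rewrite /qpoch big_ord_recr. Qed.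

Lemma qpochE (F : fieldType) (q : F) j N :
  qpoch (q ^+ j) q N = \prod_(i < N) (1 - q ^+ (j + i)).
Proof. by apply: eq_bigr => i _; rewrite exprD. Qed.

Lemma qpoch_nz (F : fieldType) (q : F) j N : qok q -> (0 < j)%N -> qpoch (q ^+ j) q N != 0.
Proof.
move=> hq hj; rewrite qpochE; apply/prodf_neq0 => i _; apply: hq; lia.
Qed.

Lemma qpoch1 (F : fieldType) (q : F) N : qpoch q q N = qpoch (q ^+ 1) q N.
Proof. by rewrite expr1. Qed.

Lemma P_nz (F : fieldType) (q : F) N : qok q -> qpoch q q N != 0.
Proof. by move=> hq; rewrite qpoch1; apply: qpoch_nz. Qed.

Lemma PS (F : fieldType) (q : F) N : qpoch q q N.+1 = qpoch q q N * (1 - q ^+ N.+1).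
Proof. by rewrite qpochS exprS. Qed.

Lemma QS (F : fieldType) (q : F) j N :
  qpoch (q ^+ j) q N.+1 = qpoch (q ^+ j) q N * (1 - q ^+ j * q ^+ N).
Proof. by rewrite qpochS. Qed.

Lemma Qshift (F : fieldType) (q : F) j N :
  qpoch (q ^+ j) q N.+1 = (1 - q ^+ j) * qpoch (q ^+ j.+1) q N.
Proof.
rewrite /qpoch big_ord_recl /= expr0 mulr1; congr (_ * _).
apply: eq_bigr => i _; rewrite /bump /= add1n.
by rewrite -!exprD addnS addSn.
Qed.
Definition tt_ (F : fieldType) (q : F) m n k :=
  (-1) ^+ k * q ^+ (m * k + 'C(k.+1, 2))
      / (qpoch q q k * qpoch q q (n - k) * qpoch (q ^+ k) q m.+1).
Definition ww (F : fieldType) (q : F) m n j :=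
  q ^+ (n - j) * ((-1) ^+ j.+1 * q ^+ (m * j.+1 + 'C(j.+2, 2))
      / (qpoch q q j * qpoch q q (n - j) * qpoch (q ^+ j.+1) q m.+1)).

Lemma nzX (F : fieldType) (q : F) i : qok q -> (0 < i)%N -> 1 - q ^+ i != 0.
Proof. by move=> hq; apply: hq. Qed.

Lemma ptA (F : fieldType) (q : F) m n j : qok q -> (j < n)%N ->
  (1 - q ^+ n.+1) * tt_ q m n.+1 j.+1 = tt_ q m n j.+1 + ww q m n j.
Proof.
move=> hq /subnKC; move: (n - j.+1)%N => a <-.
have e1 : ((j.+1 + a).+1 - j.+1 = a.+1)%N by lia.
have e2 : ((j.+1 + a) - j.+1 = a)%N by lia.
have e3 : ((j.+1 + a) - j = a.+1)%N by lia.
rewrite /tt_ /ww e1 e2 e3.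
set X := q ^+ (_ + _); set Q := qpoch (q ^+ j.+1) q m.+1; set s := (-1) ^+ _.
have hQ : Q != 0 by apply: qpoch_nz.
have hj := nzX hq (ltn0Sn j). have ha := nzX hq (ltn0Sn a).
have hja := nzX hq (ltn0Sn (j + a).+1).
have hPj := P_nz j hq. have hPa := P_nz a hq.
rewrite !PS. move: hj ha hja. rewrite !exprS !exprD => hj ha hja.
by field; rewrite hQ ha hPa hPj hj.
Qed.

Lemma P0 (F : fieldType) (q : F) : qpoch q q 0 = 1.
Proof. by rewrite /qpoch big_ord0. Qed.

Lemma ptB (F : fieldType) (q : F) m n : qok q ->
  (1 - q ^+ n.+1) * tt_ q m n.+1 n.+1 = ww q m n n.
Proof.
move=> hq; rewrite /tt_ /ww !subnn P0 expr0 PS.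
set X := q ^+ (_ + _); set Q := qpoch (q ^+ n.+1) q m.+1; set s := (-1) ^+ _.
have hQ : Q != 0 by apply: qpoch_nz.
have hn := nzX hq (ltn0Sn n). have hPn := P_nz n hq.
by field; rewrite hQ hn hPn.
Qed.

Lemma ptC (F : fieldType) (q : F) m n : qok q ->
  ww q m n 0 = - q ^+ (m + n).+1 / (qpoch q q m.+1 * qpoch q q n).
Proof.
move=> hq; rewrite /ww subn0 P0 -qpoch1 expr1 muln1 addn1 -addSn exprD.
have hPn := P_nz n hq. have hPm := P_nz m.+1 hq.
by field; rewrite hPn hPm.
Qed.

Lemma ptD (F : fieldType) (q : F) m n j : qok q -> (j < n)%N ->
  ww q m n j.+1 = - q ^+ (m + n).+1 * (tt_ q m n j.+1 - (1 - q ^+ m.+1) * tt_ q m.+1 n j.+1).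
Proof.
move=> hq /subnKC; move: (n - j.+1)%N => a <-.
have e2 : ((j.+1 + a) - j.+1 = a)%N by lia.
have e4 : (m * j.+2 + 'C(j.+3, 2) = (m * j.+1 + 'C(j.+2, 2)) + m + j.+2)%N.
  by rewrite [in LHS]binS bin1 [(m * j.+2)%N]mulnS; lia.
have e5 : (m.+1 * j.+1 + 'C(j.+2, 2) = (m * j.+1 + 'C(j.+2, 2)) + j.+1)%N.
  by rewrite mulSn; lia.
rewrite /tt_ /ww e2 e4 e5.
have hQ2 : qpoch (q ^+ j.+2) q m.+1 = qpoch (q ^+ j.+1) q m.+2 / (1 - q ^+ j.+1).
  have hj := nzX hq (ltn0Sn j).
  by rewrite (Qshift q j.+1 m.+1); field.
rewrite hQ2 QS.
move: (m * j.+1 + 'C(j.+2, 2))%N => E.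
set Q := qpoch (q ^+ j.+1) q m.+1.
have hQ : Q != 0 by apply: qpoch_nz.
have hj := nzX hq (ltn0Sn j). have hPj := P_nz j.+1 hq. have hPa := P_nz a hq.
have hjm := nzX hq (ltn0Sn (j.+1 + m)).
move: hj hjm. rewrite !exprS !exprD !exprS => hj hjm.
rewrite ?exprS ?exprD ?exprS.
have -> : q * q ^+ j * (q * q ^+ m) = q * (q * (q ^+ j * q ^+ m)) by ring.
by field; rewrite hQ hjm hj hPj hPa.
Qed.

Definition TT (F : fieldType) (q : F) m n := \sum_(j < n) tt_ q m n j.+1.

Lemma step (F : fieldType) (q : F) m n : qok q ->
  (1 - q ^+ n.+1) * TT q m n.+1 = TT q m n - q ^+ (m + n).+1 *
     (1 / (qpoch q q m.+1 * qpoch q q n) + TT q m n - (1 - q ^+ m.+1) * TT q m.+1 n).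
Proof.
move=> hq; rewrite /TT big_ord_recr /= mulrDr mulr_sumr.
rewrite (eq_bigr (fun i : 'I_n => tt_ q m n i.+1 + ww q m n i)); last first.
  by move=> i _; apply: ptA.
rewrite big_split /= ptB //.
have H1 : \sum_(i < n.+1) ww q m n i = \sum_(i<n) ww q m n i + ww q m n n
  by rewrite big_ord_recr.
have H2 : \sum_(i < n.+1) ww q m n i = ww q m n 0 + \sum_(i<n) ww q m n i.+1
  by rewrite big_ord_recl.
rewrite -addrA -H1 H2 ptC //.
rewrite [\sum_(i < n) ww q m n i.+1](eq_bigr (fun i : 'I_n => - q ^+ (m + n).+1 * (tt_ q m n i.+1 - (1 - q ^+ m.+1) * tt_ q m.+1 n i.+1))); last first.
  by move=> i _; apply: ptD.
rewrite -mulr_sumr sumrB -mulr_sumr.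
set A := \sum_(i < n) tt_ q m n i.+1.
set B := \sum_(i < n) tt_ q m.+1 n i.+1.
have hPn := P_nz n hq. have hPm := P_nz m.+1 hq.
by field; rewrite hPn hPm.
Qed.

Definition gg (F : fieldType) (q : F) k := q ^+ k / (1 - q ^+ k).

Lemma mainL (F : fieldType) (q : F) n : qok q -> forall m,
  TT q m n = - (\sum_(j < n) gg q (m + j).+1) / (qpoch q q m * qpoch q q n).
Proof.
move=> hq; elim: n => [|n IH] m.
  by rewrite /TT !big_ord0 oppr0 mul0r.
have hn := nzX hq (ltn0Sn n).
apply: (mulfI hn); rewrite step // !IH.
have E1 : \sum_(j < n.+1) gg q (m + j).+1 = \sum_(j < n) gg q (m + j).+1 + gg q (m + n).+1
  by rewrite big_ord_recr.
have E2 : \sum_(j < n.+1) gg q (m + j).+1 = gg q m.+1 + \sum_(j < n) gg q (m.+1 + j).+1.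
  by rewrite big_ord_recl addn0; congr (_ + _); apply: eq_bigr => i _; rewrite addnS.
have E3 : \sum_(j < n) gg q (m.+1 + j).+1 = \sum_(j < n) gg q (m + j).+1 + gg q (m + n).+1 - gg q m.+1.
  by rewrite -E1 E2 addrC addKr.
rewrite E1 E3.
move: (\sum_(j < n) gg q (m + j).+1) => S.
have hm := nzX hq (ltn0Sn m). have hmn := nzX hq (ltn0Sn (m + n)).
have hPn := P_nz n hq. have hPm := P_nz m hq.
rewrite /gg !PS.
move: hm hmn hn; rewrite !exprS !exprD => hm hmn hn.
rewrite ?exprS ?exprD.
by field; rewrite hm hmn hn hPn hPm.
Qed.

Lemma Hsplit (F : fieldType) (q : F) a b :
  \sum_(1 <= k < (a + b).+1) gg q k =
  \sum_(1 <= k < a.+1) gg q k + \sum_(j < b) gg q (a + j).+1.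
Proof.
elim: b => [|b IH]; first by rewrite addn0 big_ord0 addr0.
by rewrite addnS big_nat_recr //= IH big_ord_recr /= addrA.
Qed.

Lemma qv_ok : qok qv.
Proof.
move=> i hi; rewrite subr_eq0 /qv -tofracXn -tofrac1 tofrac_eq.
apply/negP => /eqP h; have := congr1 (fun p : {poly rat} => size p) h.
rewrite /= size_polyXn size_poly1 => h2; lia.
Qed.

Lemma convT m n : \sum_(1 <= k < n.+1)
     ((-1) ^+ k * qv ^+ (m * k + 'C(k.+1, 2))
      / (qpoch qv qv k * qpoch qv qv (n - k) * qpoch (qv ^+ k) qv m.+1)) = TT qv m n.
Proof. by rewrite big_add1 big_mkord. Qed.

Lemma finalalg (F : fieldType) (A B Pm Pn : F) : Pm != 0 -> Pn != 0 ->
  - A / (Pm * Pn) - - B / (Pn * Pm) = (Pm * Pn)^-1 * (B - A).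
Proof. by move=> h1 h2; field; rewrite h1 h2. Qed.

Theorem corollary6p4 (m n : nat) :
  \sum_(1 <= k < n.+1)
     ((-1) ^+ k * qv ^+ (m * k + 'C(k.+1, 2))
      / (qpoch qv qv k * qpoch qv qv (n - k) * qpoch (qv ^+ k) qv m.+1))
  - \sum_(1 <= k < m.+1)
     ((-1) ^+ k * qv ^+ (n * k + 'C(k.+1, 2))
      / (qpoch qv qv k * qpoch qv qv (m - k) * qpoch (qv ^+ k) qv n.+1))
  = (qpoch qv qv m * qpoch qv qv n)^-1
    * (\sum_(1 <= k < m.+1) (qv ^+ k / (1 - qv ^+ k))
       - \sum_(1 <= k < n.+1) (qv ^+ k / (1 - qv ^+ k))).
Proof.
rewrite !convT !mainL; try exact: qv_ok.
have h1 := Hsplit qv m n. have h2 := Hsplit qv n m.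
rewrite addnC h1 in h2.
have e : \sum_(1 <= k < m.+1) (qv ^+ k / (1 - qv ^+ k)) - \sum_(1 <= k < n.+1) (qv ^+ k / (1 - qv ^+ k))
  = \sum_(j < m) gg qv (n + j).+1 - \sum_(j < n) gg qv (m + j).+1.
  rewrite -[\sum_(1 <= k < m.+1) _]/(\sum_(1 <= k < m.+1) gg qv k).
  rewrite -[\sum_(1 <= k < n.+1) _]/(\sum_(1 <= k < n.+1) gg qv k).
  apply/eqP; rewrite subr_eq addrAC eq_sym subr_eq h2; apply/eqP.
  by rewrite addrC.
rewrite e; apply: finalalg; exact: P_nz qv_ok.
Qed.
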